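(* Let $n\ge3$ be odd, $d,R\in\mathbb{Q}$, $d\ne0$, $R$ not a square, $D=d^2-R$, fix a square root $\sqrt R$, let $u$ be a zero of $f_n=f_n(Z,d,R)$ and $\zeta$ a primitive $n$th root of unity. For $k=0,\dots,n-1$ put $$u_k=\frac u2(\zeta^k+\zeta^{-k})+DA(u)\sqrt R(\zeta^k-\zeta^{-k})$$ (these are zeros of $f_n$; moreover $u\neq0$ and $A(u)\ne0$). Then for every odd $k\in\{1,\dots,n-1\}$, $$u_k=\frac u2F_k\Big(\frac{u_1+u_{n-1}}{u}\Big)+DA(u)P_k\Big(\frac{u_1-u_{n-1}}{2DA(u)}\Big),$$ and $u_{n-k}$ is obtained by the same expression with the plus sign between the two summands replaced by a minus sign.
   Context: For $k\ge1$, $F_k=\sum_{j=0}^{\lfloor k/2\rfloor}c_{k,j}Z^{k-2j}$ with $c_{k,j}=(-1)^j\frac{k}{k-j}\binom{k-j}{j}$ (so $2\cos(kx)=F_k(2\cos x)$). $f_n(Z,d,R)=\sqrt D^{\,n}F_n(Z/\sqrt D)-2dD^{(n-1)/2}=\sum_{j=0}^{(n-1)/2}c_{n,j}D^jZ^{n-2j}-2dD^{(n-1)/2}$. $A=\frac{1}{2R}\big(F_{n-1}(Z/\sqrt D)-\frac{dZ}{D}\big)\in\mathbb{Q}[Z]$, where $F_{n-1}(Z/\sqrt D)=\sum_{j=0}^{(n-1)/2}c_{n-1,j}D^{\,j-(n-1)/2}Z^{n-1-2j}$. For odd $k$, $P_k=i\sqrt R\,(-1)^{(k-1)/2}F_k\big(Z/(i\sqrt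 R)\big)=(-1)^{(k-1)/2}\sum_{j=0}^{(k-1)/2}c_{k,j}(-R)^{\,j-(k-1)/2}Z^{k-2j}\in\mathbb{Q}[Z]$. *)

(* Defs.v *)
From HB Require Import structures.
From mathcomp Require Import all_boot all_order all_algebra all_field.
Set Implicit Arguments. Unset Strict Implicit. Unset Printing Implicit Defensive.
Import Order.TTheory GRing.Theory Num.Theory.
Local Open Scope ring_scope.

Definition cc (k j : nat) : rat :=
  (-1) ^+ j * ((k%:R : rat) / (k - j)%:R) * ('C(k - j, j))%:R.

Definition Fpoly (k : nat) : {poly rat} :=
  \sum_(j < k./2.+1) cc k j *: 'X^(k - 2 * j).

Definition Dval (d R : rat) : rat := d ^+ 2 - R.

Definition fpoly (n : nat) (d R : rat) : {poly rat} :=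
  \sum_(j < (n.-1)./2.+1) (cc n j * Dval d R ^+ j) *: 'X^(n - 2 * j)
  - (2 * d * Dval d R ^+ ((n.-1)./2))%:P.

Definition Apoly (n : nat) (d R : rat) : {poly rat} :=
  (2 * R)^-1 *:
    (\sum_(j < (n.-1)./2.+1)
        (cc n.-1 j * Dval d R ^- ((n.-1)./2 - j)) *: 'X^(n.-1 - 2 * j)
     - (d / Dval d R) *: 'X).

Definition Ppoly (k : nat) (R : rat) : {poly rat} :=
  (-1) ^+ ((k.-1)./2) *:
    \sum_(j < (k.-1)./2.+1) (cc k j * (- R) ^- ((k.-1)./2 - j)) *: 'X^(k - 2 * j).

Definition evalC (p : {poly rat}) (x : algC) : algC := (map_poly ratr p).[x].

(* Main.v *)
Require Import Defs.
From HB Require Import structures.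
From mathcomp Require Import all_boot all_order all_algebra all_field.
From mathcomp Require Import zify ring lra.
Import Order.TTheory GRing.Theory Num.Theory.
Local Open Scope ring_scope.

Lemma cc_small k j : (k < 2 * j)%N -> cc k j = 0.
Proof. by move=> h; rewrite /cc bin_small ?mulr0 //; lia. Qed.

Lemma cc0 k : cc k.+1 0 = 1.
Proof. by rewrite /cc subn0 bin0 expr0 mul1r mulr1 divff // pnatr_eq0. Qed.

Lemma ccrec m i : (0 < m + 2 * i)%N ->
  cc (m + 2 * i).+2 i.+1 = cc (m + 2 * i).+1 i.+1 - cc (m + 2 * i) i.
Proof.
move=> hpos.
rewrite /cc.
have -> : ((m + 2 * i).+2 - i.+1 = (m + i).+1)%N by lia.
have -> : ((m + 2 * i).+1 - i.+1 = (m + i))%N by lia.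
have -> : ((m + 2 * i) - i = (m + i))%N by lia.
have e1 : ('C((m + i).+1, i.+1) * i.+1 = (m + i).+1 * 'C(m + i, i))%N.
  by rewrite mulnC -mul_bin_diag.
have e2 : ('C(m + i, i.+1) * i.+1 = m * 'C(m + i, i))%N.
  by rewrite mulnC mul_bin_left; congr (_ * _)%N; lia.
have i1 : (i.+1%:R : rat) != 0 by rewrite pnatr_eq0.
have h1 : ('C((m + i).+1, i.+1)%:R : rat) = (m + i).+1%:R * 'C(m + i, i)%:R / i.+1%:R.
  by rewrite -natrM -e1 natrM mulfK.
have h2 : ('C(m + i, i.+1)%:R : rat) = m%:R * 'C(m + i, i)%:R / i.+1%:R.
  by rewrite -natrM -e2 natrM mulfK.
rewrite h1 h2 exprS.
have mi : ((m + i)%:R : rat) != 0 by rewrite pnatr_eq0; lia.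
have mi1 : ((m + i).+1%:R : rat) != 0 by rewrite pnatr_eq0.
move: mi mi1 i1.
rewrite -!natr1 !(natrD, natrM).
set x : rat := m%:R; set y : rat := i%:R; set c : rat := 'C(m + i, i)%:R.
move=> mi mi1 i1.
field.
by rewrite mi1 mi i1.
Qed.

Definition tt (p s : algC) k j := ratr (cc k j) * p ^+ j * s ^+ (k - 2 * j).
Definition dsum k p s := \sum_(j < k./2.+1) tt p s k j.

Lemma dsum_widen k N p s : (k./2 < N)%N -> dsum k p s = \sum_(j < N) tt p s k j.
Proof.
move=> h; rewrite /dsum (big_ord_widen N (tt p s k)) // big_mkcond /=.
apply: eq_bigr => j _; case: ifP => // hj.
have : (k./2 < j)%N by rewrite ltnNge -ltnS hj.
rewrite ltn_half_double -mul2n => hk.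
by rewrite /tt cc_small // rmorph0 !mul0r.
Qed.

Lemma tt_rec k i p s : (0 < k)%N ->
  tt p s k.+2 i.+1 = s * tt p s k.+1 i.+1 - p * tt p s k i.
Proof.
move=> hk; case: (leqP (2 * i) k) => hi.
- have [m em] : exists m, k = (m + 2 * i)%N by exists (k - 2 * i)%N; lia.
  move: hk hi; rewrite em; clear em.
  move=> hk hi; rewrite /tt ccrec // rmorphB.
  have -> : ((m + 2 * i).+2 - 2 * i.+1 = m)%N by lia.
  have -> : ((m + 2 * i) - 2 * i = m)%N by lia.
  case: m hk hi => [|m] hk hi.
  + rewrite (@cc_small (0 + 2 * i).+1 i.+1); last by lia.
    rewrite rmorph0 !exprS; ring.
  + have -> : ((m.+1 + 2 * i).+1 - 2 * i.+1 = m)%N by lia.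
    rewrite !exprS; ring.
- rewrite /tt !cc_small ?rmorph0; try lia.
  ring.
Qed.

Lemma dsum_rec k p s : (0 < k)%N ->
  dsum k.+2 p s = s * dsum k.+1 p s - p * dsum k p s.
Proof.
move=> hk.
rewrite (@dsum_widen k.+2 k.+3) ?ltn_half_double; last by rewrite -mul2n; lia.
rewrite (@dsum_widen k.+1 k.+3) ?ltn_half_double; last by rewrite -mul2n; lia.
rewrite (@dsum_widen k k.+3) ?ltn_half_double; last by rewrite -mul2n; lia.
rewrite big_ord_recl [in X in s * X]big_ord_recl [in X in p * X]big_ord_recr /=.
have -> : tt p s k (@ord_max k.+2) = 0 by rewrite /tt cc_small ?rmorph0 ?mul0r //=; lia.
have -> : tt p s k.+2 (@ord0 k.+2) = s * tt p s k.+1 (@ord0 k.+2).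
  by rewrite /tt /= !cc0 !subn0 rmorph1 exprS; ring.
rewrite addr0 mulrDr -addrA; congr (_ + _).
rewrite !mulr_sumr -sumrB; apply: eq_bigr => i _.
by rewrite /bump /= add1n tt_rec.
Qed.

Lemma cc21 : cc 2 1 = - 2%:R.
Proof. rewrite /cc /= expr1 divr1 mulN1r. by []. Qed.

Lemma dickson k a b : (0 < k)%N -> dsum k (a * b) (a + b) = a ^+ k + b ^+ k.
Proof.
move=> hk.
suff H : forall k, dsum k.+1 (a * b) (a + b) = a ^+ k.+1 + b ^+ k.+1 /\
                   dsum k.+2 (a * b) (a + b) = a ^+ k.+2 + b ^+ k.+2.
  by case: k hk => // k _; case: (H k).
clear hk k; elim=> [|k [IH1 IH2]].
  split.
    by rewrite /dsum /= big_ord1 /tt cc0 rmorph1 /=; ring.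
  rewrite /dsum /= !big_ord_recr big_ord0 /= /tt /= cc0 cc21 rmorph1 rmorphN.
  rewrite rmorph_nat /=.
  ring.
split=> //.
rewrite dsum_rec // IH1 IH2 !exprS; ring.
Qed.

Lemma hm1 m : (((2 * m).+1).-1)./2 = m.
Proof. by rewrite /= mul2n half_double. Qed.
Lemma hm2 m : ((2 * m).+1)./2 = m.
Proof. by rewrite /= mul2n uphalf_double. Qed.
Lemma hm3 m : (2 * m)./2 = m.
Proof. by rewrite mul2n half_double. Qed.

Lemma ratr2 : ratr 2 = 2 :> algC.
Proof. by rewrite rmorph_nat. Qed.

Lemma evalF k x : evalC (Fpoly k) x = dsum k 1 x.
Proof.
rewrite /evalC /Fpoly rmorph_sum horner_sum /dsum; apply: eq_bigr => j _.
by rewrite /= map_polyZ map_polyXn hornerZ hornerXn /tt expr1n mulr1. Qed.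

Lemma evalS I (r : seq I) (F : I -> {poly rat}) x :
  evalC (\sum_(j <- r) F j) x = \sum_(j <- r) evalC (F j) x.
Proof. by rewrite /evalC rmorph_sum horner_sum. Qed.
Lemma evalXn k x : evalC 'X^k x = x ^+ k.
Proof. by rewrite /evalC map_polyXn hornerXn. Qed.

Lemma evalB p q x : evalC (p - q) x = evalC p x - evalC q x.
Proof. by rewrite /evalC rmorphB hornerD hornerN. Qed.
Lemma evalCC c x : evalC c%:P x = ratr c.
Proof. by rewrite /evalC map_polyC hornerC. Qed.
Lemma evalZ c p x : evalC (c *: p) x = ratr c * evalC p x.
Proof. by rewrite /evalC map_polyZ hornerZ. Qed.
Lemma evalX x : evalC 'X x = x.
Proof. by rewrite /evalC map_polyX hornerX. Qed.

Lemma evalf m d R x : evalC (fpoly (2 * m).+1 d R) x =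
  dsum (2 * m).+1 (ratr (Dval d R)) x - 2 * ratr d * ratr (Dval d R) ^+ m.
Proof.
rewrite /fpoly evalB evalS evalCC.
rewrite !rmorphM rmorphXn rmorph_nat hm1.
congr (_ - _).
rewrite /dsum hm2; apply: eq_bigr => j _.
by rewrite evalZ evalXn /tt rmorphM rmorphXn ?mulrA.
Qed.

Lemma Dsum_mul (D : algC) k m (c : nat -> algC) x : D != 0 ->
  D ^+ m * \sum_(j < m.+1) c j * D ^- (m - j) * x ^+ (k - 2 * j) =
  \sum_(j < m.+1) c j * D ^+ j * x ^+ (k - 2 * j).
Proof.
move=> hD; rewrite mulr_sumr; apply: eq_bigr => j _.
have hj : (j <= m)%N by rewrite -ltnS.
have -> : D ^+ m = D ^+ j * D ^+ (m - j) by rewrite -exprD subnKC.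
have hE : D ^+ (m - j) != 0 by rewrite expf_neq0.
field.
by rewrite hE.
Qed.

Lemma evalA m d R x : (Dval d R) != 0 -> R != 0 ->
  ratr (Dval d R) ^+ m * (2 * ratr R * evalC (Apoly (2 * m).+1 d R) x) =
  dsum (2 * m) (ratr (Dval d R)) x - ratr (Dval d R) ^+ m * (ratr d / ratr (Dval d R) * x).
Proof.
move=> hD hR.
have hD' : ratr (Dval d R) != 0 :> algC by rewrite fmorph_eq0.
have hR' : 2 * ratr R != 0 :> algC by rewrite mulf_neq0 ?fmorph_eq0 ?pnatr_eq0.
rewrite /Apoly evalZ evalB evalS evalZ evalX /= hm3.
rewrite fmorphV rmorphM rmorph_nat (rmorphM _ d) fmorphV.
rewrite [2 * ratr R * _]mulrA mulfV // mul1r mulrBr.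
congr (_ - _).
rewrite (eq_bigr (fun j : 'I_m.+1 => ratr (cc (2 * m) j) * ratr (Dval d R) ^- (m - j) * x ^+ (2 * m - 2 * j))); last first.
  by move=> j _; rewrite evalZ evalXn rmorphM fmorphV rmorphXn.
rewrite (@Dsum_mul _ (2 * m) m (fun j => ratr (cc (2 * m) j)) x hD') /dsum hm3.
by apply: eq_bigr => j _; rewrite /tt.
Qed.

Lemma evalP k R x : R != 0 ->
  (- ratr R) ^+ k * evalC (Ppoly (2 * k).+1 R) x =
  (-1) ^+ k * dsum (2 * k).+1 (- ratr R) x.
Proof.
move=> hR.
have hR' : - ratr R != 0 :> algC by rewrite oppr_eq0 fmorph_eq0.
rewrite /Ppoly evalZ evalS /= hm3 rmorphXn rmorphN1 mulrCA; congr (_ * _).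
rewrite (eq_bigr (fun j : 'I_k.+1 => ratr (cc (2 * k).+1 j) * (- ratr R) ^- (k - j) * x ^+ ((2 * k).+1 - 2 * j))); last first.
  by move=> j _; rewrite evalZ evalXn rmorphM fmorphV rmorphXn rmorphN.
rewrite (@Dsum_mul _ (2 * k).+1 k (fun j => ratr (cc (2 * k).+1 j)) x hR') /dsum hm2.
by apply: eq_bigr => j _; rewrite /tt.
Qed.

Lemma odd_ex k : odd k -> exists k', k = (2 * k').+1.
Proof. by move=> hko; exists k./2; move: (odd_double_half k); rewrite hko /= -mul2n; lia. Qed.

Lemma sign_odd k : (-1) ^+ (2 * k).+1 = -1 :> algC.
Proof. by rewrite exprS exprM sqrrN expr1n expr1n mulr1. Qed.

Lemma pow_odd (x : algC) k : x ^+ (2 * k).+1 = x * (x ^+ 2) ^+ k.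
Proof. by rewrite exprS exprM. Qed.

Theorem theorem3 (n : nat) (d R : rat) (sqR u z : algC) :
  (3 <= n)%N -> odd n -> d != 0 -> ~ (exists q : rat, q ^+ 2 = R) ->
  sqR ^+ 2 = ratr R ->
  evalC (fpoly n d R) u = 0 ->
  n.-primitive_root z ->
  let D : algC := ratr (Dval d R) in
  let Au := evalC (Apoly n d R) u in
  let uk := fun k : nat =>
    u / 2 * (z ^+ k + z ^- k) + D * Au * sqR * (z ^+ k - z ^- k) in
  [/\ forall k : nat, (k < n)%N -> evalC (fpoly n d R) (uk k) = 0,
      u != 0, Au != 0 &
      forall k : nat, odd k -> (1 <= k < n)%N ->
        uk k = u / 2 * evalC (Fpoly k) ((uk 1%N + uk n.-1) / u)
               + D * Au * evalC (Ppoly k R) ((uk 1%N - uk n.-1) / (2 * D * Au))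
        /\
        uk (n - k)%N = u / 2 * evalC (Fpoly k) ((uk 1%N + uk n.-1) / u)
               - D * Au * evalC (Ppoly k R) ((uk 1%N - uk n.-1) / (2 * D * Au))].
Proof.
move=> hn3 hodd hd hRsq hsq hf hz.
have [m hm] : exists m, n = (2 * m).+1.
  by exists n./2; move: (odd_double_half n); rewrite hodd /= -mul2n; lia.
subst n.
move=> D Au uk.
have m1 : (0 < m)%N by lia.
have hDv : Dval d R != 0.
  apply/eqP => h; apply: hRsq; exists d; apply/eqP; rewrite -subr_eq0; exact/eqP.
have hR0 : R != 0.
  by apply/eqP => h; apply: hRsq; exists 0; rewrite h expr0n.
have hDc : D != 0 by rewrite fmorph_eq0.
have hDe : D = (ratr d) ^+ 2 - (ratr R) by rewrite /D /Dval rmorphB rmorphXn.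
have hrd : (ratr d) != 0 :> algC by rewrite fmorph_eq0.
have hrR : (ratr R) != 0 :> algC by rewrite fmorph_eq0.
have hsq0 : sqR != 0.
  by apply/eqP => h; move: hsq; rewrite h expr0n /= => /esym /eqP; rewrite (negbTE hrR).
have hfg : forall a b, a * b = D ->
    evalC (fpoly (2 * m).+1 d R) (a + b) = a ^+ (2 * m).+1 + b ^+ (2 * m).+1 - 2 * (ratr d) * D ^+ m.
  by move=> a b hab; rewrite evalf -/D -hab dickson.
set Dm := D ^+ m.
have hDm : Dm != 0 by rewrite expf_neq0.
set N := (2 * m).+1.
pose r := sqrtC (u ^+ 2 - 4 * D).
have hr : r ^+ 2 = u ^+ 2 - 4 * D by exact: sqrtCK.
have [w0 [v0 [h0s h0p]]] : exists w0 v0, w0 + v0 = u /\ w0 * v0 = D.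
  exists ((u + r) / 2), ((u - r) / 2).
  split; first by field.
  transitivity ((u ^+ 2 - r ^+ 2) / 4); first by field.
  by rewrite hr; field.
have hXY : w0 ^+ N + v0 ^+ N = 2 * ratr d * Dm.
  by apply/eqP; rewrite -subr_eq0 -hfg // h0s hf.
have hXY2 : w0 ^+ N * v0 ^+ N = Dm * Dm * D.
  by rewrite -exprMn h0p /N pow_odd -exprM mulnC exprM; rewrite /Dm; ring.
have hY : v0 ^+ N = 2 * ratr d * Dm - w0 ^+ N by rewrite -hXY; ring.
rewrite hY in hXY2.
have hsq2 : (w0 ^+ N - ratr d * Dm) ^+ 2 == (Dm * sqR) ^+ 2.
  rewrite -subr_eq0; apply/eqP.
  transitivity (Dm * Dm * D - w0 ^+ N * (2 * ratr d * Dm - w0 ^+ N)).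
    by rewrite exprMn hsq hDe; ring.
  by rewrite hXY2 subrr.
have [w [v [hs [hp hw]]]] : exists w v,
    [/\ w + v = u, w * v = D & w ^+ N = Dm * (ratr d - sqR)].
  move: hsq2; rewrite eqf_sqr => /orP [] /eqP h.
    exists v0, w0; split; [by rewrite addrC | by rewrite mulrC |].
    by rewrite hY; move/(canRL (subrK _)): h => ->; ring.
  by exists w0, v0; split => //; move/(canRL (subrK _)): h => ->; ring.
have hv : v ^+ N = Dm * (ratr d + sqR).
  have := hfg w v hp; rewrite hs hf -/Dm hw => /eqP; rewrite eq_sym subr_eq0 => /eqP.
  move/(canRL (addKr _)) => ->; ring.
clear hXY hXY2 hY hsq2 h0s h0p w0 v0 hr r.
have hds : dsum (2 * m) D u = w ^+ (2 * m) + v ^+ (2 * m).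
  by rewrite -hs -hp dickson //; lia.
have E1 : 2 * ratr R * Au * D = sqR * (w - v).
  apply: (mulfI hDm).
  have hA := evalA m d R u hDv hR0; rewrite -/D -/Au -/Dm hds in hA.
  transitivity (Dm * (2 * ratr R * Au) * D); first ring.
  rewrite hA.
  have hW : w ^+ (2 * m) * D = v * (Dm * (ratr d - sqR)) by rewrite -hw -hp /N exprS; ring.
  have hV : v ^+ (2 * m) * D = w * (Dm * (ratr d + sqR)) by rewrite -hv -hp /N exprS; ring.
  transitivity (w ^+ (2 * m) * D + v ^+ (2 * m) * D - Dm * ratr d * u).
    by field; rewrite hDc.
  rewrite hW hV -hs; ring.
have hs2 : D * Au * sqR = (w - v) / 2.
  have h2R : 2 * ratr R != 0 :> algC by rewrite mulf_neq0 // pnatr_eq0.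
  apply: (mulfI h2R).
  transitivity (2 * ratr R * Au * D * sqR); first ring.
  by rewrite E1 -hsq; field.
have hz1 : z ^+ N = 1 by exact: prim_expr_order.
have hz0 : z != 0.
  by apply/eqP => h; move: hz1; rewrite h expr0n /= => /eqP; rewrite eq_sym oner_eq0.
have hzk : forall k, z ^+ k != 0 by move=> k; rewrite expf_neq0.
have huk : forall k, uk k = w * z ^+ k + v * z ^- k.
  by move=> k; rewrite /uk hs2 -hs; field.
have hNk : forall k, (k <= N)%N -> z ^+ (N - k) = z ^- k.
  move=> k hk; apply: (mulIf (hzk k)); rewrite -exprD subnK // hz1 mulVf //.
have hpowN : forall k, (z ^+ k) ^+ N = 1.
  by move=> k; rewrite -exprM mulnC exprM hz1 expr1n.
have hu0 : u != 0.
  apply/eqP => hu.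
  have hv' : v = - w by apply/eqP; rewrite -subr_eq0 opprK addrC hs hu.
  move: hv; rewrite hv' exprNn /N sign_odd -/N hw => /eqP.
  rewrite -subr_eq0 => /eqP h.
  have e : 2 * ratr d * Dm = - (-1 * (Dm * (ratr d - sqR)) - Dm * (ratr d + sqR)) by ring.
  rewrite h oppr0 in e; move/eqP: e.
  by apply/negP; apply: mulf_neq0 => //; apply: mulf_neq0 => //; rewrite pnatr_eq0.
have hAu : Au != 0.
  apply/eqP => hA.
  move: hs2; rewrite hA mulr0 mul0r => /esym /eqP.
  rewrite mulf_eq0 invr_eq0 pnatr_eq0 /= orbF subr_eq0 => /eqP hwv.
  move: hw; rewrite hwv hv => /eqP.
  rewrite -subr_eq0 => /eqP h.
  have e : 2 * sqR * Dm = Dm * (ratr d + sqR) - Dm * (ratr d - sqR) by ring.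
  rewrite h in e; move/eqP: e.
  by apply/negP; apply: mulf_neq0 => //; apply: mulf_neq0 => //; rewrite pnatr_eq0.
split => //.
  move=> k hk; rewrite huk hfg.
    rewrite -/N -/Dm (exprMn _ w) (exprMn _ v) hpowN (exprVn (z ^+ k)) hpowN invr1 hw hv.
    ring.
  transitivity (w * v * (z ^+ k * z ^- k)); first ring.
  by rewrite mulfV // mulr1.
move=> k hko /andP [hk1 hkN].
have hN1 : z ^+ N.-1 = z^-1 by rewrite -subn1 hNk // expr1.
have e1 : (uk 1%N + uk N.-1) / u = z + z^-1.
  rewrite /uk hN1 invrK expr1; field; rewrite ?hu0 ?hz0 //.
have e2 : (uk 1%N - uk N.-1) / (2 * D * Au) = sqR * (z - z^-1).
  rewrite /uk hN1 invrK expr1; field; rewrite ?hDc ?hAu ?hz0 //.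
have hF : evalC (Fpoly k) (z + z^-1) = z ^+ k + z ^- k.
  by rewrite evalF -[X in dsum _ X _](mulfV hz0) dickson // exprVn.
have [k' hk'] := odd_ex k hko.
have hP : evalC (Ppoly k R) (sqR * (z - z^-1)) = sqR * (z ^+ k - z ^- k).
  have hRk : (- ratr R) ^+ k' != 0 :> algC by rewrite expf_neq0 // oppr_eq0.
  apply: (mulfI hRk); rewrite hk' evalP //.
  have hab : (sqR * z) * (- (sqR * z^-1)) = - ratr R by rewrite -hsq; field; rewrite ?hz0.
  have hab2 : sqR * (z - z^-1) = sqR * z + - (sqR * z^-1) by ring.
  rewrite hab2 -[X in dsum _ X _]hab dickson //.
  rewrite (exprNn (sqR * z^-1)) (exprNn (ratr R)) sign_odd (exprMn _ sqR z) (exprMn _ sqR z^-1) (pow_odd sqR) hsq exprVn.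
  ring.
split.
  by rewrite e1 e2 hF hP /uk; ring.
rewrite e1 e2 hF hP /uk hNk ?invrK; last exact: ltnW.
ring.
Qed.
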